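(* Let $n\ge2$ and let $E_1,\dots,E_n,H_1,\dots,H_n$ be logically independent events with $H_i\ne\emptyset$ for all $i$. Then the set $\Pi$ of all coherent prevision assessments $(x_1,\dots,x_n,x_{1\cdots n})$ on $\mathcal F=\{E_1|H_1,\dots,E_n|H_n,\mathscr C_{1\cdots n}\}$ is $$\Pi=\{(x_1,\dots,x_n,x_{1\cdots n}):(x_1,\dots,x_n)\in[0,1]^n,\ T_L(x_1,\dots,x_n)\le x_{1\cdots n}\le T_M(x_1,\dots,x_n)\},$$ where $T_L(x_1,\dots,x_n)=\max\{\sum_{i=1}^nx_i-n+1,0\}$ and $T_M(x_1,\dots,x_n)=\min\{x_1,\dots,x_n\}$. In particular the Fréchet–Hoeffding bounds for the prevision of the conjunction are sharp.
   Context: Events are identified with their indicators; $\bar E$ is the negation of $E$ and $EH$ the conjunction. For events $E,H$ with $H\neq\emptyset$, the conditional event $E|H$ is true if $EH$ is true, false if $\bar EH$ is true, void if $\bar H$ is true; once $P(E|H)=x$ is assessed, $E|H$ is identified with the random quantity $EH+x\bar H$. More generally a finite conditional random quantity $X|H$ with assessed prevision $\mu=\mathbb P(X|H)$ is identified with $XH+\mu\bar H$. Coherence (de Finetti): a prevision assessment $(\mu_1,\dots,\mu_m)$ on a family $\{X_1|H_1,\dots,X_m|H_m\}$ is coherent iff for every choice of real stakes $s_1,\dots,s_m$ the random gain $G=\sum_{i}s_iH_i(X_i-\mu_i)$, restricted to the values it can take when $H_1\vee\dots\vee H_m$ is true, satisfies $\min G\le 0\le\max G$ (and the same holds for every subfamily).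 Events $E_1,\dots,E_n,H_1,\dots,H_n$ are logically independent if all $2^{2n}$ conjunctions of these events or their negations are nonempty. Conjunction of $n$ conditional events: for every nonempty $S\subseteq\{1,\dots,n\}$ let $x_S$ be a prevision value assigned to $\mathscr C_S=\bigwedge_{i\in S}(E_i|H_i)$ (defined recursively, $\mathscr C_{\{i\}}=E_i|H_i$, $x_{\{i\}}=x_i$). Then $\mathscr C_{1\cdots n}$ is the random quantity equal to $1$ if $\bigwedge_{i=1}^nE_iH_i$ is true; $0$ if $\bigvee_{i=1}^n\bar E_iH_i$ is true; $x_S$ if $(\bigwedge_{i\in S}\bar H_i)\wedge(\bigwedge_{i\notin S}E_iH_i)$ is true, for each nonempty strict subset $S$; and $x_{1\cdots n}=\mathbb P(\mathscr C_{1\cdots n})$ if $\bigwedge_{i=1}^n\bar H_i$ is true. The values $x_S$ of the strict sub-conjunctions are fixed (coherently assessed) beforehand; the statement concerns the assessment on $\mathcal F$. *)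

(* Defs.v *)
From HB Require Import structures.
From mathcomp Require Import all_boot all_order all_algebra.
From mathcomp Require Import reals.
Set Implicit Arguments. Unset Strict Implicit. Unset Printing Implicit Defensive.
Import Order.TTheory GRing.Theory Num.Theory.
Local Open Scope ring_scope.

Section Defs.
Variable R : realType.

(* De Finetti coherence of a prevision assessment [mu] on a finite family of
   conditional random quantities {X_j | Hc_j : j in D}: for every subfamily J
   of D and every choice of real stakes s, the random gain
   G = sum_{j in J} s_j Hc_j (X_j - mu_j), restricted to the outcomes where
   the disjunction of the conditioning events of J is true, satisfies
   min G <= 0 <= max G. *)
Definition coherent_on (Omega : Type) (I : finType) (D : {set I})
  (X : I -> Omega -> R) (Hc : I -> Omega -> bool) (mu : I -> R) : Prop :=
  forall (J : {set I}) (s : I -> R), J \subset D ->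
    let G := fun w => \sum_(j in J) s j * (Hc j w)%:R * (X j w - mu j) in
    (exists w, [exists j in J, Hc j w]) ->
    (exists w, [exists j in J, Hc j w] /\ G w <= 0) /\
    (exists w, [exists j in J, Hc j w] /\ 0 <= G w).

(* Logical independence of E_1..E_n, H_1..H_n: all 2^(2n) constituents
   are nonempty. *)
Definition logically_independent (Omega : Type) (n : nat)
  (E H : 'I_n -> Omega -> bool) : Prop :=
  forall a b : 'I_n -> bool, exists w, forall i, E i w = a i /\ H i w = b i.

(* The conjunction C_S of the conditional events E_i|H_i (i in S), given the
   prevision values x T of the sub-conjunctions (x [set i] = P(E_i|H_i)):
   1 if all E_i H_i (i in S) true; 0 if some not-E_i H_i (i in S) true;
   x T if exactly the H_i, i in T (T nonempty, T subset of S), are false and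
   the E_i H_i, i in S \ T, are true (T = S gives the prevision x S). *)
Definition conjRQ (Omega : Type) (n : nat) (E H : 'I_n -> Omega -> bool)
  (x : {set 'I_n} -> R) (S : {set 'I_n}) (w : Omega) : R :=
  if [exists i in S, ~~ E i w && H i w] then 0
  else if [forall i in S, H i w] then 1
  else x [set i in S | ~~ H i w].

Definition condH (Omega : Type) (n : nat) (H : 'I_n -> Omega -> bool)
  (S : {set 'I_n}) (w : Omega) : bool := [exists i in S, H i w].

Definition TL (n : nat) (v : 'I_n -> R) : R :=
  Num.max (\sum_(i < n) v i - n%:R + 1) 0.

Definition minseq (s : seq R) : R := foldr Num.min (head 0 s) (behead s).

Definition TM (n : nat) (v : 'I_n -> R) : R := minseq [seq v i | i <- enum 'I_n].

End Defs.

(* indices of the strict nonempty sub-conjunctions (coherently assessed beforehand) *)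
Definition strict_subs (n : nat) : {set {set 'I_n}} :=
  [set S : {set 'I_n} | (S != set0) && (S != setT)].

Definition familyF (n : nat) : {set {set 'I_n}} :=
  [set S : {set 'I_n} | #|S| == 1%N] :|: [set setT].

(* Main.v *)
Require Import Defs.
From HB Require Import structures.
From mathcomp Require Import all_boot all_order all_algebra.
From mathcomp Require Import reals.
From mathcomp Require Import ring lra.
Import Order.TTheory GRing.Theory Num.Theory.
Local Open Scope ring_scope.

Lemma conjRQ_allH (R : realType) (n : nat) (Omega : Type)
  (E H : 'I_n -> Omega -> bool) (x : {set 'I_n} -> R) S w :
  (forall i, H i w) -> conjRQ E H x S w = ([forall i in S, E i w])%:R.
Proof.
move=> hH; rewrite /conjRQ.
case: ifP => [/existsP [i /andP [iS /andP [nE _]]] | hne].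
  suff -> : [forall i in S, E i w] = false by [].
  apply/negbTE/negP => /forallP /(_ i); rewrite iS /=; by apply/negP.
have -> : [forall i in S, H i w] by apply/forallP => i; rewrite hH implybT.
suff -> : [forall i in S, E i w] by [].
apply/forallP => i; apply/implyP => iS; apply/negPn/negP => nE.
move/negbT: hne => /negP; apply; apply/existsP; exists i; by rewrite iS nE hH.
Qed.

Lemma minseq_ge (R : realType) (t : R) (a : R) (l : seq R) :
  (t <= foldr Num.min a l) = (t <= a) && all (fun y => t <= y) l.
Proof.
elim: l => [|b l IH] /=; first by rewrite andbT.
by rewrite le_min IH andbCA.
Qed.

Lemma TM_ge (R : realType) (n : nat) (v : 'I_n -> R) t : (0 < n)%N ->
  (t <= TM v) <-> (forall i, t <= v i).
Proof.
move=> n0; rewrite /TM /minseq.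
case E: (enum 'I_n) => [|a l] /=.
  by move: (mem_enum 'I_n (Ordinal n0)); rewrite E.
rewrite minseq_ge; split.
  move=> /andP [ha /allP hl] i.
  have : i \in enum 'I_n by rewrite mem_enum.
  rewrite E inE => /orP [/eqP -> //|].
  by move=> il; apply: hl; apply: map_f.
move=> h; rewrite h /=; apply/allP => y /mapP [i _ ->]; exact: h.
Qed.
Lemma set1_neqT (n : nat) (i : 'I_n) : (1 < n)%N -> [set i] != setT.
Proof.
move=> n1; apply/eqP => h.
by move: (cards1 i); rewrite h cardsT card_ord => e; rewrite e in n1.
Qed.

Lemma sum_familyF (R : realType) n (J : {set {set 'I_n}}) (F : {set 'I_n} -> R) :
  (1 < n)%N -> J \subset familyF n ->
  \sum_(j in J) F j = (if setT \in J then F setT else 0)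
     + \sum_i (if [set i] \in J then F [set i] else 0).
Proof.
move=> n1 sJ.
have -> : \sum_(j in J) F j = (if setT \in J then F setT else 0)
    + \sum_(j | (j \in J) && (j != setT)) F j.
  case: (boolP (setT \in J)) => hT; first by rewrite (bigD1 setT hT).
  rewrite add0r; apply: eq_bigl => j; case: (boolP (j \in J)) => //= jJ.
  by apply/esym/negP => /eqP ej; rewrite -ej jJ in hT.
congr (_ + _); rewrite -big_mkcond /=.
rewrite (eq_bigl (fun i => i \in [set i | [set i] \in J])); last by move=> i; rewrite inE.
rewrite -(big_imset (fun j => F j) (h := fun i : 'I_n => [set i]) (A := [set i | [set i] \in J])) /=; last first.
  by move=> i j _ _; apply: set1_inj.
apply: eq_bigl => j; apply/andP/imsetP.
  move=> [jJ jT]; move: (subsetP sJ j jJ). rewrite /familyF. rewrite !inE (negbTE jT) orbF.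
  move=> /cards1P [i ej]; exists i; last by []. by rewrite inE -ej.
by move=> [i]; rewrite inE => iJ ->; split => //; apply: set1_neqT.
Qed.
Lemma argmax_ex (R : realType) n (f : 'I_n -> R) : (0 < n)%N ->
  exists m, forall i, f i <= f m.
Proof.
move=> n0; have [m _ hm] := @arg_maxP _ _ _ (Ordinal n0) predT f isT.
by exists m => i; apply: hm.
Qed.

Lemma choose_Z (R : realType) n (sg u : 'I_n -> R) (c : R) : (0 < n)%N ->
  (forall i, 0 <= u i <= c) -> c <= \sum_i u i ->
  exists Z : {set 'I_n}, Z != set0 /\
    \sum_i sg i * (u i - c * (i \in Z)%:R) <= 0.
Proof.
move=> n0 hu hc.
case: (boolP [exists i, 0 < sg i]) => [/existsP [i0 hi0] | hne].
  exists [set i | 0 < sg i]; split.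
    by apply/set0Pn; exists i0; rewrite inE.
  apply: sumr_le0 => i _; rewrite inE.
  have := hu i; case: ltP => hs /=; move=> /andP [h1 h2]; nra.
have hle : forall i, sg i <= 0.
  by move=> i; rewrite leNgt; apply/negP => h; move/negP: hne; apply; apply/existsP; exists i.
have [m hm] := @argmax_ex _ _ sg n0.
exists [set m]; split; first by apply/set0Pn; exists m; rewrite inE.
have -> : \sum_i sg i * (u i - c * (i \in [set m])%:R)
   = \sum_i sg i * u i - sg m * c.
  rewrite (eq_bigr (fun i => sg i * u i - sg i * (c * (i \in [set m])%:R))); last by move=> i _; rewrite mulrBr.
  rewrite sumrB; congr (_ - _).
  rewrite (bigD1 m) //= big1 ?addr0; first by rewrite in_set1 eqxx mulr1 mulrC.
  by move=> i /negbTE hi; rewrite in_set1 hi /= !mulr0.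
have : \sum_i sg i * u i <= \sum_i sg m * u i.
  apply: ler_sum => i _; have := hu i; have := hm i; move=> h /andP [h1 h2]; nra.
rewrite -mulr_sumr => h; have := hle m; nra.
Qed.

Lemma forall_set1 (T : finType) (P : T -> bool) i : [forall k in [set i], P k] = P i.
Proof.
apply/forallP/idP => [/(_ i)|h k]; rewrite ?in_set1 ?eqxx //=.
by apply/implyP => /eqP ->.
Qed.

Lemma familyF_ne n (j : {set 'I_n}) : (0 < n)%N -> j \in familyF n -> exists i, i \in j.
Proof.
move=> n0; rewrite /familyF !inE => /orP [/cards1P [i ->]|/eqP ->].
  by exists i; rewrite inE.
by exists (Ordinal n0); rewrite inE.
Qed.

Lemma G_allH (R : realType) (n : nat) (Omega : Type)
  (E H : 'I_n -> Omega -> bool) (x : {set 'I_n} -> R) (J : {set {set 'I_n}}) (s : {set 'I_n} -> R) w :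
  (0 < n)%N -> J \subset familyF n -> (forall i, H i w) ->
  \sum_(j in J) s j * (condH H j w)%:R * (conjRQ E H x j w - x j)
  = \sum_(j in J) s j * ([forall i in j, E i w]%:R - x j).
Proof.
move=> n0 sJ hH; apply: eq_bigr => j jJ.
have [i ij] := @familyF_ne _ j n0 (subsetP sJ j jJ).
have -> : condH H j w by apply/existsP; exists i; rewrite ij hH.
by rewrite (@conjRQ_allH _ _ _ E H x j w hH) mulr1.
Qed.

Lemma back_L (R : realType) (n : nat) (Omega : Type)
  (E H : 'I_n -> Omega -> bool) (x : {set 'I_n} -> R) (J : {set {set 'I_n}}) (s : {set 'I_n} -> R) :
  (1 < n)%N -> logically_independent E H ->
  (forall i : 'I_n, 0 <= x [set i] <= 1) ->
  TL (fun i => x [set i]) <= x setT -> x setT <= TM (fun i => x [set i]) ->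
  J \subset familyF n -> J != set0 ->
  exists w, [exists j in J, condH H j w] /\
   \sum_(j in J) s j * (condH H j w)%:R * (conjRQ E H x j w - x j) <= 0.
Proof.
move=> n1 LI hx hTL hTM sJ Jne.
have n0 : (0 < n)%N by apply: ltnW.
set t := x setT.
move: hTL; rewrite /TL ge_max => /andP [hTL ht0].
rewrite -/t in hTL ht0 hTM.
have hti : forall i, t <= x [set i] by apply/TM_ge.
pose sg (i : 'I_n) := if [set i] \in J then s [set i] else 0.
pose u (i : 'I_n) := 1 - x [set i].
have [Z [Zne hZ]] : exists Z : {set 'I_n}, Z != set0 /\
    \sum_i sg i * (u i - (1 - t) * (i \in Z)%:R) <= 0.
  apply: choose_Z => //.
    by move=> i; rewrite /u; have := hti i; have := hx i; move=> /andP [h1 h2] h3; apply/andP; split; lra.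
  rewrite /u sumrB sumr_const card_ord; lra.
have [w1 hw1] := LI (fun _ => true) (fun _ => true).
have [w2 hw2] := LI (fun i => i \notin Z) (fun _ => true).
have hH1 : forall i, H i w1 by move=> i; case: (hw1 i).
have hH2 : forall i, H i w2 by move=> i; case: (hw2 i).
have hE1 : forall i, E i w1 by move=> i; case: (hw1 i).
have hE2 : forall i, E i w2 = (i \notin Z) by move=> i; case: (hw2 i).
have hcond : forall w, (forall i, H i w) -> [exists j in J, condH H j w].
  move=> w hH; have [j jJ] := set0Pn _ Jne.
  have [i ij] := @familyF_ne _ j n0 (subsetP sJ j jJ).
  by apply/existsP; exists j; rewrite jJ; apply/existsP; exists i; rewrite ij hH.
rewrite /= in hE1 hE2.
set G := fun w => \sum_(j in J) s j * (condH H j w)%:R * (conjRQ E H x j w - x j).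
have key : t * G w1 + (1 - t) * G w2 = \sum_i sg i * (u i - (1 - t) * (i \in Z)%:R).
  rewrite /G !G_allH // !mulr_sumr -big_split /= sum_familyF //.
  have fT1 : [forall i in setT, E i w1] by apply/forallP => i; rewrite hE1 implybT.
  have fT2 : [forall i in setT, E i w2] = false.
    have [z zZ] := set0Pn _ Zne; apply/negbTE/negP => /forallP /(_ z).
    by rewrite in_setT hE2 zZ.
  rewrite fT1 fT2 /t [X in X + _](_ : _ = 0); last first. by case: ifP => _ //=; ring.
  rewrite add0r; apply: eq_bigr => i _; rewrite /sg /u !forall_set1 hE1 hE2.
  by case: ifP => _; case: (i \in Z) => /=; ring.
case: (lerP (G w1) 0) => h1; first by exists w1; split => //; apply: hcond.
case: (lerP (G w2) 0) => h2; first by exists w2; split => //; apply: hcond.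
have ht1 : t <= 1 by apply: le_trans (hti (Ordinal n0)) _; case/andP: (hx (Ordinal n0)).
exfalso; move: hZ; rewrite -key => hZ.
case: (lerP (G w1) (G w2)) => h12.
  nra. nra.
Qed.

Lemma back_coh (R : realType) (n : nat) (Omega : Type)
  (E H : 'I_n -> Omega -> bool) (x : {set 'I_n} -> R) :
  (1 < n)%N -> logically_independent E H ->
  (forall i : 'I_n, 0 <= x [set i] <= 1) ->
  TL (fun i => x [set i]) <= x setT -> x setT <= TM (fun i => x [set i]) ->
  coherent_on (familyF n) (conjRQ E H x) (condH H) x.
Proof.
move=> n1 LI hx hTL hTM J s sJ G [w0 /existsP [j0 /andP [j0J _]]].
have Jne : J != set0 by apply/set0Pn; exists j0.
split.
  have [w [hw hG]] := @back_L R n Omega E H x J s n1 LI hx hTL hTM sJ Jne.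
  by exists w.
have [w [hw hG]] := @back_L R n Omega E H x J (fun j => - s j) n1 LI hx hTL hTM sJ Jne.
exists w; split => //; rewrite /G -oppr_le0 -sumrN.
by under eq_bigr => j _ do rewrite -!mulNr.
Qed.

Lemma exists_set1 (T : finType) (P : T -> bool) i : [exists k in [set i], P k] = P i.
Proof.
apply/existsP/idP => [[k /andP [/set1P -> //]]|h]; by exists i; rewrite in_set1 eqxx.
Qed.

Lemma conj1_H (R : realType) (n : nat) (Omega : Type)
  (E H : 'I_n -> Omega -> bool) (x : {set 'I_n} -> R) i w :
  H i w -> conjRQ E H x [set i] w = (E i w)%:R.
Proof.
by move=> hH; rewrite /conjRQ exists_set1 forall_set1 hH andbT; case: (E i w).
Qed.

Lemma term1 (R : realType) (n : nat) (Omega : Type)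
  (E H : 'I_n -> Omega -> bool) (x : {set 'I_n} -> R) i w :
  (condH H [set i] w)%:R * (conjRQ E H x [set i] w - x [set i])
  = if H i w then (E i w)%:R - x [set i] else 0.
Proof.
rewrite /condH exists_set1; case: ifP => h; last by rewrite mul0r.
by rewrite mul1r (@conj1_H R n Omega E H x i w h).
Qed.

Lemma conjRQ_cases (R : realType) (n : nat) (Omega : Type)
  (E H : 'I_n -> Omega -> bool) (x : {set 'I_n} -> R) S w :
  condH H S w ->
  [\/ (exists2 i, i \in S & ~~ E i w && H i w) /\ conjRQ E H x S w = 0,
      (forall i, i \in S -> E i w && H i w) /\ conjRQ E H x S w = 1 |
      [/\ [set i in S | ~~ H i w] \proper S, [set i in S | ~~ H i w] != set0,
          (forall i, i \in S -> H i w -> E i w) &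
          conjRQ E H x S w = x [set i in S | ~~ H i w]]].
Proof.
move=> /existsP [i0 /andP [i0S hi0]]; rewrite /conjRQ.
case: ifP => [/existsP [i /andP [iS hi]]|hne].
  by apply: Or31; split => //; exists i.
have hEH : forall i, i \in S -> H i w -> E i w.
  move=> i iS hH; apply/negPn/negP => nE; move/negbT: hne => /negP; apply.
  by apply/existsP; exists i; rewrite iS nE hH.
case: ifP => [/forallP hall|hnall].
  apply: Or32; split => // i iS; have := hall i; rewrite iS /= => hH.
  by rewrite hH hEH.
apply: Or33; split => //.
- apply/properP; split; first by apply/subsetP => i; rewrite inE => /andP [].
  by exists i0 => //; rewrite inE hi0 andbF.
- apply/set0Pn; move/negbT: hnall; rewrite negb_forall => /existsP [i].
  by rewrite negb_imply => /andP [iS hH]; exists i; rewrite inE iS.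
Qed.

Lemma coh_app (R : realType) (Omega : Type) (I : finType) (D : {set I})
  (X : I -> Omega -> R) (Hc : I -> Omega -> bool) (mu : I -> R) :
  coherent_on D X Hc mu -> forall (J : {set I}) (s : I -> R), J \subset D ->
    (exists w, [exists j in J, Hc j w]) ->
    (exists w, [exists j in J, Hc j w] /\
       \sum_(j in J) s j * (Hc j w)%:R * (X j w - mu j) <= 0) /\
    (exists w, [exists j in J, Hc j w] /\
       0 <= \sum_(j in J) s j * (Hc j w)%:R * (X j w - mu j)).
Proof. by move=> coh J s sJ; apply: coh. Qed.
Arguments coh_app {R Omega I D X Hc mu}.

Definition bnd (R : realType) n (x : {set 'I_n} -> R) (Z : {set 'I_n}) : Prop :=
  [/\ 0 <= x Z, (forall i, i \in Z -> x Z <= x [set i]) &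
      1 - \sum_(i in Z) (1 - x [set i]) <= x Z].
Arguments bnd {R n}.

Lemma single_bd (R : realType) (n : nat) (Omega : Type)
  (E H : 'I_n -> Omega -> bool) (x : {set 'I_n} -> R) D i :
  coherent_on D (conjRQ E H x) (condH H) x -> [set i] \in D ->
  (exists w, H i w) -> 0 <= x [set i] <= 1.
Proof.
move=> coh iD [w0 h0].
have hsub : [set [set i]] \subset D by rewrite sub1set.
have hex : exists w, [exists j in [set [set i]], condH H j w].
  by exists w0; rewrite exists_set1 /condH exists_set1.
have [[w [hw1 hG1]] [w' [hw2 hG2]]] :=
  coh_app coh [set [set i]] (fun _ => 1) hsub hex.
rewrite big_set1 mul1r term1 in hG1.
rewrite big_set1 mul1r term1 in hG2.
move: hw1 hw2; rewrite !exists_set1 /condH !exists_set1 => hw1 hw2.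
rewrite hw1 in hG1; rewrite hw2 in hG2.
apply/andP; split.
  by move: hG1; case: (E i w) => /=; lra.
by move: hG2; case: (E i w') => /=; lra.
Qed.

Lemma C_bounds (R : realType) (n : nat) (Omega : Type)
  (E H : 'I_n -> Omega -> bool) (x : {set 'I_n} -> R) S w :
  condH H S w -> (forall Z : {set 'I_n}, Z \proper S -> Z != set0 -> bnd x Z) ->
  (forall i, x [set i] <= 1) -> 0 <= conjRQ E H x S w <= 1.
Proof.
move=> hc IH hx1.
case: (@conjRQ_cases R n Omega E H x S w hc) => [[_ ->]|[_ ->]|[pZ nZ _ ->]].
- by rewrite lexx ler01.
- by rewrite ler01 lexx.
have [z zZ] := set0Pn _ nZ.
case: (IH _ pZ nZ) => h0 h1 _; rewrite h0 /=.
exact: le_trans (h1 z zZ) (hx1 z).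
Qed.

Lemma step (R : realType) (n : nat) (Omega : Type)
  (E H : 'I_n -> Omega -> bool) (x : {set 'I_n} -> R) (D : {set {set 'I_n}}) S :
  coherent_on D (conjRQ E H x) (condH H) x -> (forall i, [set i] \in D) ->
  S \in D -> S != set0 -> (forall i, exists w, H i w) ->
  (forall Z : {set 'I_n}, Z \proper S -> Z != set0 -> bnd x Z) -> bnd x S.
Proof.
move=> coh hD SD Sne hw IH.
have hx1 : forall i, 0 <= x [set i] <= 1.
  by move=> i; apply: (@single_bd R n Omega E H x D i coh (hD i) (hw i)).
have hx1' : forall i, x [set i] <= 1 by move=> i; case/andP: (hx1 i).
have hx0 : forall i, 0 <= x [set i] by move=> i; case/andP: (hx1 i).
have [i0 i0S] := set0Pn _ Sne.
have hSw : exists w, condH H S w.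
  by case: (hw i0) => w h; exists w; apply/existsP; exists i0; rewrite i0S h.
case: (boolP (#|S| == 1%N)) => [/cards1P [i ->]|S2].
  split; first exact: hx0.
    by move=> j /set1P ->.
  by rewrite big_set1; lra.
have neS : forall i, [set i] != S.
  by move=> i; apply/eqP => e; move: S2; rewrite -e cards1.
have hCb : forall w, condH H S w -> 0 <= conjRQ E H x S w <= 1.
  by move=> w hc; apply: C_bounds.
have hA : 0 <= x S.
  have hsub : [set S] \subset D by rewrite sub1set.
  have hex : exists w, [exists j in [set S], condH H j w].
    by case: hSw => w h; exists w; rewrite exists_set1.
  have [[w [hw1 hG]] _] := coh_app coh [set S] (fun _ => 1) hsub hex.
  rewrite exists_set1 in hw1; rewrite big_set1 hw1 !mul1r in hG.
  by have := hCb w hw1; lra.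
have hB : forall i, i \in S -> x S <= x [set i].
  move=> i iS.
  have hsub : [set i] |: [set S] \subset D.
    by apply/subsetP => j; rewrite !inE => /orP [/eqP ->|/eqP ->].
  have hex : exists w, [exists j in [set i] |: [set S], condH H j w].
    by case: hSw => w h; exists w; apply/existsP; exists S; rewrite !inE eqxx orbT h.
  have [_ [w [hw1 hG]]] := coh_app coh _ (fun j => if j == S then 1 else -1) hsub hex.
  rewrite big_setU1 ?big_set1 /= ?in_set1 ?neS // eqxx (negbTE (neS i)) in hG.
  rewrite -mulrA term1 in hG.
  have hcS : condH H S w.
    move/existsP: hw1 => [j /andP [jJ hj]]; move: jJ; rewrite !inE => /orP [/eqP ej|/eqP ej]; subst j.
      by rewrite /condH exists_set1 in hj; apply/existsP; exists i; rewrite iS hj.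
    exact: hj.
  rewrite hcS !mul1r in hG.
  case hHi: (H i w) in hG.
    case hEi: (E i w) in hG.
      by have := hCb w hcS; rewrite /= in hG; lra.
    have C0 : conjRQ E H x S w = 0.
      rewrite /conjRQ; have -> // : [exists k in S, ~~ E k w && H k w].
      by apply/existsP; exists i; rewrite iS hEi hHi.
    by rewrite C0 /= in hG; lra.
  case: (@conjRQ_cases R n Omega E H x S w hcS) => [[_ C0]|[hall _]|[pZ nZ _ CZ]].
  - by rewrite C0 in hG; have := hx0 i; lra.
  - by have := hall i iS; rewrite hHi andbF.
  have iZ : i \in [set k in S | ~~ H k w] by rewrite inE iS hHi.
  by case: (IH _ pZ nZ) => _ h1 _; have := h1 i iZ; rewrite CZ in hG; lra.
split => //.
set Js := [set [set k] | k in S].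
have nSJ : S \notin Js.
  by apply/imsetP => -[k _ ek]; move: (neS k); rewrite -ek eqxx.
have hsub : S |: Js \subset D.
  by apply/subsetP => j; rewrite in_setU1 => /orP [/eqP ->|/imsetP [k _ ->]].
have hex : exists w, [exists j in S |: Js, condH H j w].
  by case: hSw => w h; exists w; apply/existsP; exists S; rewrite in_setU1 eqxx h.
have [_ [w [hw1 hG]]] := coh_app coh (S |: Js) (fun j => if j == S then -1 else 1) hsub hex.
rewrite big_setU1 // eqxx /= in hG.
rewrite big_imset /= in hG; last by move=> a b _ _; apply: set1_inj.
pose f k := if H k w then (E k w)%:R - x [set k] else 0.
have eS : \sum_(k in S) (if [set k] == S then -1 else 1) * (condH H [set k] w)%:R *
     (conjRQ E H x [set k] w - x [set k]) = \sum_(k in S) f k.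
  by apply: eq_bigr => k _; rewrite (negbTE (neS k)) -mulrA mul1r term1.
rewrite eS in hG.
have hcS : condH H S w.
  move/existsP: hw1 => [j /andP [jJ hj]]; move: jJ; rewrite in_setU1 => /orP [/eqP ej|/imsetP [k kS ej]]; subst j => //.
  by rewrite /condH exists_set1 in hj; apply/existsP; exists k; rewrite kS hj.
rewrite hcS mulr1 in hG.
case: (@conjRQ_cases R n Omega E H x S w hcS) => [[[i1 i1S /andP [nE hH]] C0]|[hall C1]|[pZ nZ hEH CZ]].
- have : \sum_(k in S) f k <= \sum_(k in S) (1 - x [set k]) - 1.
    rewrite (bigD1 i1) //= [X in _ <= X - _](bigD1 i1) //= /f hH (negbTE nE) /=.
    have : \sum_(k in S | k != i1) (if H k w then (E k w)%:R - x [set k] else 0)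
          <= \sum_(k in S | k != i1) (1 - x [set k]).
      apply: ler_sum => k _; case: (H k w); case: (E k w) => /=; have := hx0 k; have := hx1' k; lra.
    lra.
  by rewrite C0 in hG; lra.
- have e1 : \sum_(k in S) f k = \sum_(k in S) (1 - x [set k]).
    by apply: eq_bigr => k kS; have /andP [e h] := hall k kS; rewrite /f h e.
  by rewrite C1 e1 in hG; lra.
have e1 : \sum_(k in S) f k = \sum_(k in S | H k w) (1 - x [set k]).
  rewrite (bigID (fun k => H k w)) /= [X in _ + X]big1 ?addr0; last first.
    by move=> k /andP [_ /negbTE hk]; rewrite /f hk.
  by apply: eq_bigr => k /andP [kS hk]; rewrite /f hk (hEH k kS hk).
have e2 : \sum_(k in S) (1 - x [set k]) = \sum_(k in S | H k w) (1 - x [set k])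
     + \sum_(k in [set k in S | ~~ H k w]) (1 - x [set k]).
  by rewrite (bigID (fun k => H k w)) /=; congr (_ + _); apply: eq_bigl => k; rewrite inE.
case: (IH _ pZ nZ) => _ _ h3.
by rewrite CZ e1 in hG; lra.
Qed.

Lemma strict_bnd (R : realType) (n : nat) (Omega : Type)
  (E H : 'I_n -> Omega -> bool) (x : {set 'I_n} -> R) :
  (1 < n)%N -> (forall i, exists w, H i w) ->
  coherent_on (strict_subs n) (conjRQ E H x) (condH H) x ->
  forall S, S \in strict_subs n -> bnd x S.
Proof.
move=> n1 hw coh.
have hD : forall i, [set i] \in strict_subs n.
  move=> i; rewrite inE set1_neqT // andbT; apply/set0Pn; exists i; exact: set11.
suff : forall k (S : {set 'I_n}), (#|S| <= k)%N -> S \in strict_subs n -> bnd x S.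
  by move=> h S; apply: h (leqnn _).
elim=> [|k IHk] S hk SD.
  by move: SD; rewrite inE -cards_eq0 -leqn0 hk.
have Sne : S != set0 by move: SD; rewrite inE => /andP [].
apply: (@step R n Omega E H x _ S coh hD SD Sne hw) => Z pZ nZ.
apply: IHk; first by rewrite -ltnS; apply: leq_trans (proper_card pZ) hk.
rewrite inE nZ /=; apply/negP => /eqP eZ; move: pZ; rewrite eZ => /properP [sTS _].
by move: SD; rewrite inE => /andP [_ /negP]; apply; rewrite eqEsubset sTS subsetT.
Qed.

Theorem theorem10 (R : realType) (n : nat) (Omega : Type)
  (E H : 'I_n -> Omega -> bool) (x : {set 'I_n} -> R) :
  (2 <= n)%N ->
  logically_independent E H ->
  (forall i, exists w, H i w) ->
  coherent_on (strict_subs n) (conjRQ E H x) (condH H) x ->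
  (coherent_on (familyF n) (conjRQ E H x) (condH H) x <->
   ((forall i : 'I_n, 0 <= x [set i] <= 1) /\
    TL (fun i => x [set i]) <= x setT <= TM (fun i => x [set i]))).
Proof.
move=> n1 LI hw cohS; split; last first.
  by move=> [hx /andP [h1 h2]]; apply: back_coh.
move=> cohF.
have n0 : (0 < n)%N by apply: ltnW.
have hD : forall i, [set i] \in familyF n by move=> i; rewrite !inE cards1.
have hx : forall i, 0 <= x [set i] <= 1.
  by move=> i; apply: (@single_bd R n Omega E H x _ i cohF (hD i) (hw i)).
have TD : setT \in familyF n by rewrite !inE eqxx orbT.
have Tne : [set: 'I_n] != set0 by apply/set0Pn; exists (Ordinal n0).
have [h0 h1 h2] : bnd x setT.
  apply: (@step R n Omega E H x _ setT cohF hD TD Tne hw) => Z pZ nZ.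
  apply: (@strict_bnd R n Omega E H x n1 hw cohS).
  rewrite inE nZ /=; apply/negP => /eqP eZ; move: pZ; rewrite eZ.
  by rewrite properE subxx.
split => //; apply/andP; split.
  rewrite /TL ge_max h0 andbT.
  move: h2; rewrite (eq_bigl xpredT) ?sumrB ?sumr_const ?card_ord; first lra.
  by move=> i; rewrite in_setT.
by apply/TM_ge => // i; apply: h1; rewrite in_setT.
Qed.
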